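(* Let $M\geq 1$, $P=4M-3$, and let $x\in\ell(\mathbb{Z}_P)$ satisfy $x[p]=0$ for all $p=M,\ldots,4M-4$. Then for all $p=1,\ldots,2M-2$, $$\operatorname{CirAut}(x+Rx)[p]=\begin{cases}\displaystyle 2\operatorname{Re}\Big(\sum_{p'=\frac{p+1}{2}}^{M-1}x[p']\big(\overline{x[p'-p]}+\overline{x[p-p']}\big)\Big) & \text{if } p \text{ is odd},\\[2ex] \displaystyle 2\operatorname{Re}\Big(\sum_{p'=\frac{p}{2}+1}^{M-1}x[p']\big(\overline{x[p'-p]}+\overline{x[p-p']}\big)\Big)+\big|x[\tfrac{p}{2}]\big|^2 & \text{if } p \text{ is even},\end{cases}$$ where indices of $x$ are interpreted modulo $P$.
   Context: $\ell(\mathbb{Z}_P)$ denotes the space of $P$-periodic functions $u\colon\mathbb{Z}\to\mathbb{C}$, with inner product $\langle u,v\rangle=\sum_{p\in\mathbb{Z}_P}u[p]\overline{v[p]}$. The translation operator is $(T^pu)[p']:=u[p'-p]$ and the reversal operator is $(Ru)[p]:=u[-p]$. The circular autocorrelation is $\operatorname{CirAut}(u)[p]:=\langle u,T^pu\rangle=\sum_{p'\in\mathbb{Z}_P}u[p']\overline{u[p'-p]}$. *)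

(* Defs.v *)
From HB Require Import structures.
From mathcomp Require Import all_boot all_order all_algebra.
From mathcomp Require Import complex.
From mathcomp Require Import reals.
Set Implicit Arguments. Unset Strict Implicit. Unset Printing Implicit Defensive.
Import Order.TTheory GRing.Theory Num.Theory.
Local Open Scope ring_scope.

(* Elements of l(Z_P) are modelled as functions int -> C that are P-periodic. *)
Definition periodic (C : Type) (P : nat) (u : int -> C) : Prop :=
  forall p : int, u (p + P%:Z) = u p.

Definition rev_op (C : Type) (u : int -> C) : int -> C := fun p => u (- p).

Definition CirAut (C : numClosedFieldType) (P : nat) (u : int -> C) (p : int) : C :=
  \sum_(i < P) u (i%:Z) * (u (i%:Z - p))^*.

(* Main.v *)
Require Import Defs.
From mathcomp Require Import zify ring.
From mathcomp Require Import all_boot all_order all_algebra complex reals.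
Import GRing.Theory Num.Theory.
Local Open Scope ring_scope.
Lemma shift_sum (V : nmodType) (a n : nat) (F : nat -> V) :
  \sum_(a <= i < a + n) F i = \sum_(0 <= i < n) F (i + a)%N.
Proof. by rewrite -{1}[a]add0n big_addn addKn. Qed.
Lemma restr (V : nmodType) (m n k : nat) (F : nat -> V) :
  (m <= n)%N -> (n <= k)%N -> (forall i, (n <= i)%N -> (i < k)%N -> F i = 0) ->
  \sum_(m <= i < k) F i = \sum_(m <= i < n) F i.
Proof.
move=> h1 h2 H; rewrite (@big_cat_nat _ _ _ n m k xpredT F h1 h2) /=.
rewrite [X in _ + X](_ : _ = 0) ?addr0 // big_nat_cond big1 // => i /andP[/andP[? ?] _]; exact: H.
Qed.
Lemma restrl (V : nmodType) (m n k : nat) (F : nat -> V) :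
  (m <= n)%N -> (n <= k)%N -> (forall i, (m <= i)%N -> (i < n)%N -> F i = 0) ->
  \sum_(m <= i < k) F i = \sum_(n <= i < k) F i.
Proof.
move=> h1 h2 H; rewrite (@big_cat_nat _ _ _ n m k xpredT F h1 h2) /=.
rewrite [X in X + _](_ : _ = 0) ?add0r // big_nat_cond big1 // => i /andP[/andP[? ?] _]; exact: H.
Qed.
Lemma ce (R : realType) (x : int -> R[i]) a b c d : a = b -> c = d ->
  x a * (x c)^* = x b * (x d)^*.
Proof. by move=> -> ->. Qed.

Theorem theorem2 (R : realType) (M : nat) (x : int -> R[i]) :
  (1 <= M)%N ->
  periodic (4 * M - 3) x ->
  (forall p : int, (M%:Z <= p <= (4 * M - 4)%:Z) -> x p = 0) ->
  forall p : nat, (1 <= p <= 2 * M - 2)%N ->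
    CirAut (4 * M - 3) (fun q => x q + rev_op x q) p%:Z =
    if odd p then
      2 * 'Re (\sum_(p.+1./2 <= p' < M)
                 x p'%:Z * ((x (p'%:Z - p%:Z))^* + (x (p%:Z - p'%:Z))^*))
    else
      2 * 'Re (\sum_((p./2).+1 <= p' < M)
                 x p'%:Z * ((x (p'%:Z - p%:Z))^* + (x (p%:Z - p'%:Z))^*))
      + `|x (p./2)%:Z| ^+ 2.
Proof.
move=> M1 Hper Hz p /andP[p1 p2].
case: M M1 Hper Hz p2 => [//|N] _ Hper Hz p2.
have N1 : (1 <= N)%N by lia.
have HP : (4 * N.+1 - 3)%N = (4 * N).+1 by lia.
rewrite /periodic HP in Hper.
have Xa : forall q : int, - (3 * N)%:Z <= q -> q <= -1 -> x q = 0.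
  move=> q h1 h2; rewrite -Hper; apply: Hz; apply/andP; split; lia.
have Xb : forall q : int, N.+1%:Z <= q -> q <= (4 * N)%:Z -> x q = 0.
  move=> q h1 h2; apply: Hz; apply/andP; split; lia.
rewrite /CirAut /rev_op HP -(big_mkord xpredT (fun i : nat => (x i%:Z + x (- i%:Z)) * (x (i%:Z - p%:Z) + x (- (i%:Z - p%:Z)))^*)).
under eq_bigr => i _ do rewrite opprB rmorphD /= mulrDl !mulrDr.
rewrite !big_split /=.
pose A := \sum_(0 <= i < N.+1) x i%:Z * (x (i%:Z - p%:Z))^*.
pose G := fun i : nat => x i%:Z * (x (p%:Z - i%:Z))^*.
have hT1 : \sum_(0 <= i < (4 * N).+1) x i%:Z * (x (i%:Z - p%:Z))^* = A.
  rewrite (@restr _ 0 N.+1) //; [lia| move=> i h1 h2; rewrite Xb ?mul0r //; lia].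
have hT2 : \sum_(0 <= i < (4 * N).+1) x i%:Z * (x (p%:Z - i%:Z))^*
   = \sum_(0 <= i < N.+1) G i.
  rewrite (@restr _ 0 N.+1) //; [lia| move=> i h1 h2; rewrite Xb ?mul0r //; lia].
have hT3 : \sum_(0 <= i < (4 * N).+1) x (- i%:Z) * (x (i%:Z - p%:Z))^* = 0.
  rewrite big_nat_cond big1 // => i /andP[/andP[_ h2] _].
  case: (ltnP i 1) => h3.
    rewrite (Xa (i%:Z - p%:Z)) ?conjC0 ?mulr0 //; lia.
  case: (leqP i N) => h4.
    rewrite Xa ?mul0r //; lia.
  case: (leqP i (3 * N)) => h5.
    rewrite -Hper Xb ?mul0r //; lia.
  rewrite (Xb (i%:Z - p%:Z)) ?conjC0 ?mulr0 //; lia.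
have hT4 : \sum_(0 <= i < (4 * N).+1) x (- i%:Z) * (x (p%:Z - i%:Z))^* = A^*.
  transitivity (\sum_(0 <= i < (4 * N).+1) x i%:Z * (x (i%:Z + p%:Z))^*).
    rewrite big_ltn // [RHS]big_ltn // big_nat_rev /=.
    congr (_ + _); first by apply: ce; lia.
    apply: eq_big_nat => i /andP[h1 h2].
    rewrite -(Hper (- _)) -[x (p%:Z - _)]Hper; apply: ce; lia.
  rewrite (@restr _ 0 N.+1) //; last first.
    by move=> i h1 h2; rewrite Xb ?mul0r //; lia.
    by lia.
  rewrite /A rmorph_sum /=.
  under [RHS]eq_bigr => i _ do rewrite rmorphM /= conjCK mulrC.
  symmetry.
  rewrite -(@restr _ 0 N.+1 (N.+1 + p)) ?leq_addr //; last first.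
    by move=> i h1 h2; rewrite (Xb i) ?conjC0 ?mulr0 //; lia.
  rewrite (@restrl _ 0 p (N.+1 + p)) ?leq_addl //; last first.
    by move=> i h1 h2; rewrite (Xa (i%:Z - p%:Z)) ?mul0r //; lia.
  rewrite addnC shift_sum; apply: eq_big_nat => i _.
  by apply: ce; lia.
rewrite hT1 hT2 hT3 hT4 add0r.
have hG : forall lo, (lo <= p.+1)%N -> (lo <= N.+1)%N ->
  \sum_(lo <= i < N.+1) G i = \sum_(lo <= i < p.+1) G i.
  move=> lo h1 h2.
  rewrite -(@restr _ lo N.+1 (N.+1 + N.+1)) ?leq_addr //; last first.
    by move=> i h3 h4; rewrite /G Xb ?mul0r //; lia.
  rewrite (@restr _ lo p.+1 (N.+1 + N.+1)) //; try lia.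
  move=> i h3 h4; case: (leqP i N) => h5.
    by rewrite /G (Xa (p%:Z - i%:Z)) ?conjC0 ?mulr0 //; lia.
  by rewrite /G Xb ?mul0r //; lia.
have hR : forall lo, (lo <= p)%N -> (lo <= N.+1)%N ->
  \sum_(lo <= i < N.+1) x i%:Z * ((x (i%:Z - p%:Z))^* + (x (p%:Z - i%:Z))^*)
  = A + \sum_(lo <= i < p.+1) G i.
  move=> lo h1 h2.
  under eq_bigr => i _ do rewrite mulrDr.
  rewrite big_split /= -hG //; try lia.
  congr (_ + _).
  rewrite /A (@restrl _ 0 lo N.+1) // => i _ h3.
  rewrite (Xa (i%:Z - p%:Z)) ?conjC0 ?mulr0 //; lia.
have hV : forall lo', (lo' <= p)%N ->
  \sum_(0 <= i < lo') G i = (\sum_(p.+1 - lo' <= i < p.+1) G i)^*.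
  move=> lo' h.
  have h' : (lo' <= p.+1)%N by lia.
  rewrite -{2}[p.+1](subnK h') (shift_sum _ (p.+1 - lo') lo') rmorph_sum [LHS]big_nat_rev /=.
  apply: eq_big_nat => i /andP[_ hi].
  rewrite /G rmorphM /= conjCK [RHS]mulrC; apply: ce; lia.
rewrite (hG 0) //; try lia.
move: (odd_double_half p) (uphalf_half p); rewrite -addnn => e1 e2.
case: ifP => Hodd; rewrite Hodd /= in e1 e2.
- have hu1 : (uphalf p <= p)%N by lia.
  have hu2 : (uphalf p <= N.+1)%N by lia.
  rewrite hR // (@big_cat_nat _ _ _ (uphalf p)) //= ?hV //; try lia.
  have -> : (p.+1 - uphalf p)%N = uphalf p by lia.
  rewrite ReE rmorphD /= mulrC divfK ?pnatr_eq0 //.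
  ring.
- have hu1 : (p./2.+1 <= p)%N by lia.
  have hu2 : (p./2.+1 <= N.+1)%N by lia.
  rewrite hR // (@big_cat_nat _ _ _ p./2) //= ?hV //; try lia.
  rewrite (@big_ltn _ _ _ p./2) //; try lia.
  have -> : (p.+1 - p./2)%N = p./2.+1 by lia.
  rewrite ReE rmorphD /= mulrC divfK ?pnatr_eq0 // normCK.
  have -> : G p./2 = x (p./2)%:Z * (x (p./2)%:Z)^* by rewrite /G; apply: ce; lia.
  ring.
Qed.
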